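(* Let $A=\begin{pmatrix} a&b\\ c&d\end{pmatrix}\in F$. Then $A$ commutes with both $C_1$ and $C_2$ if and only if $b=f_4h_2$, $c=-f_4h_3$, $d=a+f_1h_1+f_4h_4$ for some $f_1,f_4\in K[X]$.
   Context: $K$ is an infinite field of characteristic different from 2. Let $X=\{x_1,x_2,x_1',x_2'\}$ and $Y=\{y_1,y_2,y_1',y_2'\}$, and let $K[X;Y]\cong K[X]\otimes_K E(Y)$ be the free supercommutative algebra: the $x$'s are even commuting variables, the $y$'s are odd pairwise anticommuting variables, and $E(Y)$ is the Grassmann algebra on the vector space with basis $Y$. Put $C_1=\begin{pmatrix} x_1&y_1\\ y_1'&x_1'\end{pmatrix}$, $C_2=\begin{pmatrix} x_2&y_2\\ y_2'&x_2'\end{pmatrix}$, and let $F=K[C_1,C_2]$ be the unital $K$-subalgebra of $M_2(K[X;Y])$ generated by $C_1,C_2$. Define $h_1=y_1y_2y_1'y_2'$, $h_2=y_1y_2\big(y_1'(x_2'-x_2)-y_2'(x_1'-x_1)\big)$, $h_3=y_1'y_2'\big(y_1(x_2'-x_2)-y_2(x_1'-x_1)\big)$, $h_4=\big(y_1'(x_2'-x_2)-y_2'(x_1'-x_1)\big)\big(y_1(x_2'-x_2)-y_2(x_1'-x_1)\big)$. *)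

(* Defs.v *)
From HB Require Import structures.
From mathcomp Require Import all_boot all_order all_algebra.
From mathcomp Require Import mpoly.
Set Implicit Arguments. Unset Strict Implicit. Unset Printing Implicit Defensive.
Import Order.TTheory GRing.Theory.
Local Open Scope ring_scope.

(* An element of K[X;Y] = K[X] (x) E(Y) is written in the basis of
   ordered monomials y_S = y_{s1} ... y_{sk} (s1 < ... < sk, S : {set 'I_4}),
   i.e. as a function S |-> coefficient in K[X]. *)
Definition supalg (K : fieldType) := {ffun {set 'I_4} -> {mpoly K[4]}}.

Definition ninv (T U : {set 'I_4}) : nat :=
  #|[set p : 'I_4 * 'I_4 | [&& p.1 \in T, p.2 \in U & (p.2 < p.1)%N]]|.

(* y_T * y_U = (-1)^(ninv T U) y_(T u U) if T, U disjoint, 0 otherwise *)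
Definition samul (K : fieldType) (u v : supalg K) : supalg K :=
  [ffun S : {set 'I_4} => \sum_(T : {set 'I_4} | T \subset S)
      ((-1) ^+ ninv T (S :\: T)) * (u T * v (S :\: T))].

Definition emb (K : fieldType) (f : {mpoly K[4]}) : supalg K :=
  [ffun S : {set 'I_4} => if S == set0 then f else 0].

Definition sa1 (K : fieldType) : supalg K := emb 1.

Definition xv (K : fieldType) (i : 'I_4) : supalg K := emb 'X_i.
Definition yv (K : fieldType) (j : 'I_4) : supalg K :=
  [ffun S : {set 'I_4} => if S == [set j] then 1 else 0].

Definition x1 K := @xv K 0.
Definition x2 K := @xv K 1.
Definition x1' K := @xv K 2.
Definition x2' K := @xv K 3.
Definition y1 K := @yv K 0.
Definition y2 K := @yv K 1.
Definition y1' K := @yv K 2.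
Definition y2' K := @yv K 3.

Definition smxmul (K : fieldType) (A B : 'M[supalg K]_2) : 'M[supalg K]_2 :=
  \matrix_(i < 2, j < 2) \sum_(k < 2) samul (A i k) (B k j).

Definition mk2 (K : fieldType) (a b c d : supalg K) : 'M[supalg K]_2 :=
  \matrix_(i < 2, j < 2)
    if i == 0 then (if j == 0 then a else b) else (if j == 0 then c else d).

Definition C1 K : 'M[supalg K]_2 := mk2 (@x1 K) (@y1 K) (@y1' K) (@x1' K).
Definition C2 K : 'M[supalg K]_2 := mk2 (@x2 K) (@y2 K) (@y2' K) (@x2' K).

Definition kscal (K : fieldType) (c : K) : 'M[supalg K]_2 :=
  mk2 (emb c%:MP) 0 0 (emb c%:MP).

(* F = K[C1, C2]: the unital K-subalgebra of M_2(K[X;Y]) generated by C1, C2 *)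
Inductive inF (K : fieldType) : 'M[supalg K]_2 -> Prop :=
  | inF_scal c : inF (kscal c)
  | inF_C1 : inF (@C1 K)
  | inF_C2 : inF (@C2 K)
  | inF_add A B : inF A -> inF B -> inF (A + B)
  | inF_mul A B : inF A -> inF B -> inF (smxmul A B).

Definition h1 K : supalg K :=
  samul (samul (samul (@y1 K) (@y2 K)) (@y1' K)) (@y2' K).
Definition dx2 K : supalg K := @x2' K - @x2 K.
Definition dx1 K : supalg K := @x1' K - @x1 K.
Definition h2 K : supalg K :=
  samul (samul (@y1 K) (@y2 K))
        (samul (@y1' K) (@dx2 K) - samul (@y2' K) (@dx1 K)).
Definition h3 K : supalg K :=
  samul (samul (@y1' K) (@y2' K))
        (samul (@y1 K) (@dx2 K) - samul (@y2 K) (@dx1 K)).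
Definition h4 K : supalg K :=
  samul (samul (@y1' K) (@dx2 K) - samul (@y2' K) (@dx1 K))
        (samul (@y1 K) (@dx2 K) - samul (@y2 K) (@dx1 K)).

(* Main.v *)
Require Import Defs.
From HB Require Import structures.
From mathcomp Require Import all_boot all_order all_algebra.
From mathcomp Require Import mpoly.
From mathcomp Require Import ring.
Import GRing.Theory.
Local Open Scope ring_scope.
Set Implicit Arguments. Unset Strict Implicit.


Definition o0 : 'I_4 := @Ordinal 4 0 isT.
Definition o1 : 'I_4 := @Ordinal 4 1 isT.
Definition o2 : 'I_4 := @Ordinal 4 2 isT.
Definition o3 : 'I_4 := @Ordinal 4 3 isT.

Definition sset (a0 a1 a2 a3 : bool) : {set 'I_4} :=
  [set i : 'I_4 | nth false [:: a0; a1; a2; a3] i].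

Lemma ssetE (S : {set 'I_4}) :
  S = sset (o0 \in S) (o1 \in S) (o2 \in S) (o3 \in S).
Proof.
apply/setP => i; rewrite inE.
by case: i => [[|[|[|[|i]]]] Hi] //=; congr (_ \in S); apply/val_inj.
Qed.

Lemma in_sset a0 a1 a2 a3 :
  [/\ o0 \in sset a0 a1 a2 a3 = a0, o1 \in sset a0 a1 a2 a3 = a1,
      o2 \in sset a0 a1 a2 a3 = a2 & o3 \in sset a0 a1 a2 a3 = a3].
Proof. by rewrite !inE. Qed.

Lemma sset_sub a0 a1 a2 a3 b0 b1 b2 b3 :
  (sset a0 a1 a2 a3 \subset sset b0 b1 b2 b3) =
  [&& a0 ==> b0, a1 ==> b1, a2 ==> b2 & a3 ==> b3].
Proof.
apply/subsetP/idP.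
- move=> H; apply/and4P; split; apply/implyP => h;
   [have := H o0|have := H o1|have := H o2|have := H o3]; rewrite !inE /=; exact: (fun f => f h).
- move=> /and4P [h0 h1 h2 h3] i; rewrite !inE.
  by case: i => [[|[|[|[|i]]]] Hi] //=; apply/implyP.
Qed.

Lemma sset_diff a0 a1 a2 a3 b0 b1 b2 b3 :
  sset a0 a1 a2 a3 :\: sset b0 b1 b2 b3 =
  sset (a0 && ~~ b0) (a1 && ~~ b1) (a2 && ~~ b2) (a3 && ~~ b3).
Proof.
apply/setP => i; rewrite !inE.
by case: i => [[|[|[|[|i]]]] Hi] //=; rewrite andbC.
Qed.

Lemma sset_eq a0 a1 a2 a3 b0 b1 b2 b3 :
  (sset a0 a1 a2 a3 == sset b0 b1 b2 b3) =
  [&& a0 == b0, a1 == b1, a2 == b2 & a3 == b3].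
Proof.
apply/eqP/idP.
- move/setP => H.
  have H0 := H o0; have H1 := H o1; have H2 := H o2; have H3 := H o3.
  by move: H0 H1 H2 H3; rewrite !inE /= => -> -> -> ->; rewrite !eqxx.
- by case/and4P => /eqP-> /eqP-> /eqP-> /eqP->.
Qed.

Lemma ninvE (T U : {set 'I_4}) :
  ninv T U = (\sum_(i < 4) \sum_(j < 4) ((i \in T) && (j \in U) && (j < i)%N : nat))%N.
Proof.
rewrite /ninv -sum1dep_card big_mkcond pair_big /=; apply: eq_bigr => -[i j] _ /=.
by rewrite andbA; case: (_ && _ && _).
Qed.

Lemma ninv_sset a0 a1 a2 a3 b0 b1 b2 b3 :
  ninv (sset a0 a1 a2 a3) (sset b0 b1 b2 b3) =
  (a1 * b0 + a2 * (b0 + b1) + a3 * (b0 + b1 + b2))%N.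
Proof.
rewrite ninvE !big_ord_recl !big_ord0 !inE /=.
by case: a0; case: a1; case: a2; case: a3; case: b0; case: b1; case: b2; case: b3.
Qed.

Lemma card_sset a0 a1 a2 a3 : #|sset a0 a1 a2 a3| = (a0 + a1 + a2 + a3)%N.
Proof.
rewrite -sum1_card big_mkcond /= !big_ord_recl big_ord0 !inE /=.
by case: a0; case: a1; case: a2; case: a3.
Qed.

Lemma setDD (S T : {set 'I_4}) : T \subset S -> S :\: (S :\: T) = T.
Proof. by move=> TS; rewrite setDDr setDv set0U; apply/setIidPr. Qed.

Section Alg.
Variable K : fieldType.
Local Notation P := {mpoly K[4]}.

Definition mono (T : {set 'I_4}) (c : P) : supalg K :=
  [ffun S : {set 'I_4} => if S == T then c else 0].

Lemma samul_monol T c v : samul (mono T c) v =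
  [ffun S : {set 'I_4} => if T \subset S then (-1)^+ninv T (S :\: T) * (c * v (S :\: T)) else 0].
Proof.
apply/ffunP => S; rewrite !ffunE; case: ifP => TS.
- rewrite (bigD1 T) //= ffunE eqxx big1 ?addr0 // => T' /andP[_ ne].
  by rewrite ffunE (negbTE ne) mul0r mulr0.
- rewrite big1 // => T' T'S; rewrite ffunE; case: eqP => [e|_].
    by rewrite e TS in T'S.
  by rewrite mul0r mulr0.
Qed.

Lemma samul_monor u T c : samul u (mono T c) =
  [ffun S : {set 'I_4} => if T \subset S then (-1)^+ninv (S :\: T) T * (u (S :\: T) * c) else 0].
Proof.
apply/ffunP => S; rewrite !ffunE; case: ifP => TS.
- rewrite (bigD1 (S :\: T)) ?subsetDl //= ffunE setDD // eqxx big1 ?addr0 //.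
  move=> T' /andP[T'S ne]; rewrite ffunE; case: eqP => [e|_]; last by rewrite mulr0 mulr0.
  by rewrite -e setDD ?eqxx in ne.
- rewrite big1 // => T' T'S; rewrite ffunE; case: eqP => [e|_].
    by rewrite -e subsetDl in TS.
  by rewrite mulr0 mulr0.
Qed.

End Alg.



Section D.
Variable K : fieldType.
Local Notation P := {mpoly K[4]}.
Definition d1 : P := 'X_2 - 'X_0.
Definition d2 : P := 'X_3 - 'X_1.

Lemma d1_neq0 : d1 != 0.
Proof.
apply/eqP => h; have := congr1 (mcoeff U_(2%R : 'I_4)) h.
rewrite mcoeffB !mcoeffXU mcoeff0 eqxx /=.
by rewrite subr0 => /eqP; rewrite oner_eq0.
Qed.

Lemma d2_neq0 : d2 != 0.
Proof.
apply/eqP => h; have := congr1 (mcoeff U_(3%R : 'I_4)) h.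
rewrite mcoeffB !mcoeffXU mcoeff0 eqxx /=.
by rewrite subr0 => /eqP; rewrite oner_eq0.
Qed.

Definition sig : 4.-tuple P := [tuple (if i == 3%R then 'X_1 else 'X_i) | i < 4].

Definition Rc (x y : P) := exists r, x = y + d2 * r.

Lemma RM x y x' y' : Rc x y -> Rc x' y' -> Rc (x * x') (y * y').
Proof.
move=> [r ->] [r' ->]; exists (r * y' + y * r' + d2 * r * r'); ring.
Qed.

Lemma Rexp x y k : Rc x y -> Rc (x ^+ k) (y ^+ k).
Proof.
move=> h; elim: k => [|k IH]; first by exists 0; rewrite !expr0 mulr0 addr0.
by rewrite !exprS; apply: RM.
Qed.

Lemma congr_sig p : Rc p (p \mPo sig).
Proof.
elim/mpolyind: p => [|c m p _ _ [q IH]].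
  by exists 0; rewrite comp_mpoly0 mulr0 addr0.
have hm : Rc 'X_[m] ('X_[m] \mPo sig).
  rewrite comp_mpolyX mpolyXE_id.
  apply: (big_rec2 (fun x y => Rc x y)); first by exists 0; rewrite mulr0 addr0.
  move=> i x y _ hxy; apply: RM => //; apply: Rexp.
  rewrite tnth_mktuple; case: eqP => [->|_]; last by exists 0; rewrite mulr0 addr0.
  by exists 1; rewrite /d2; ring.
case: hm => r hr.
exists (c *: r + q).
rewrite comp_mpolyD comp_mpolyZ {1}hr {1}IH. 
rewrite scalerDr -!mul_mpolyC; ring.
Qed.

Lemma sig_d1 : d1 \mPo sig = d1.
Proof. by rewrite /d1 comp_mpolyB !comp_mpolyXU -!tnth_nth !tnth_mktuple. Qed.

Lemma sig_d2 : d2 \mPo sig = 0.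
Proof. by rewrite /d2 comp_mpolyB !comp_mpolyXU -!tnth_nth !tnth_mktuple /= subrr. Qed.

Lemma divis (u v : P) : u * d1 + v * d2 = 0 -> exists f, u = f * d2 /\ v = - f * d1.
Proof.
move=> h.
have hs := congr1 (comp_mpoly sig) h.
rewrite rmorphD !rmorphM /= sig_d1 sig_d2 mulr0 addr0 comp_mpoly0 in hs.
have u0 : u \mPo sig = 0.
  by move/eqP: hs; rewrite mulf_eq0 (negbTE d1_neq0) orbF => /eqP.
case: (congr_sig u) => q hq; rewrite u0 add0r in hq.
exists q; split; first by rewrite hq mulrC.
have : d2 * (q * d1 + v) = 0 by rewrite -h hq; ring.
move/eqP; rewrite mulf_eq0 (negbTE d2_neq0) /= addr_eq0 => /eqP e.
by rewrite mulNr e opprK.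
Qed.
End D.



Section A.
Variable K : fieldType.
Local Notation P := {mpoly K[4]}.

Definition s0 := sset false false false false.

Lemma embE (f : P) : emb f = mono s0 f.
Proof.
apply/ffunP => S; rewrite !ffunE; congr (if _ then _ else _).
by apply/eqP/eqP => ->; apply/setP => i; rewrite !inE; case: i => [[|[|[|[|i]]]] Hi].
Qed.

Lemma set1_0 : [set (0 : 'I_4)] = sset true false false false.
Proof. by apply/setP => i; rewrite !inE; case: i => [[|[|[|[|i]]]] Hi]. Qed.
Lemma set1_1 : [set (1 : 'I_4)] = sset false true false false.
Proof. by apply/setP => i; rewrite !inE; case: i => [[|[|[|[|i]]]] Hi]. Qed.
Lemma set1_2 : [set (2 : 'I_4)] = sset false false true false.
Proof. by apply/setP => i; rewrite !inE; case: i => [[|[|[|[|i]]]] Hi]. Qed.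
Lemma set1_3 : [set (3 : 'I_4)] = sset false false false true.
Proof. by apply/setP => i; rewrite !inE; case: i => [[|[|[|[|i]]]] Hi]. Qed.

Lemma yvE j : @yv K j = mono [set j] 1.
Proof. by []. Qed.

Lemma dx1E : @dx1 K = mono s0 ('X_2 - 'X_0).
Proof.
apply/ffunP => S; rewrite /dx1 /x1' /x1 /xv !embE !ffunE.
by case: ifP; rewrite ?subr0.
Qed.
Lemma dx2E : @dx2 K = mono s0 ('X_3 - 'X_1).
Proof.
apply/ffunP => S; rewrite /dx2 /x2' /x2 /xv !embE !ffunE.
by case: ifP; rewrite ?subr0.
Qed.

Lemma sgnE n : (-1) ^+ n = (if odd n then -1 else 1 : P).
Proof. by rewrite -signr_odd; case: (odd n); rewrite ?expr0 ?expr1. Qed.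

Ltac simp := repeat progress (rewrite ?samul_monol ?samul_monor ?ffunE ?sset_sub ?sset_diff ?sset_eq ?ninv_sset ?sgnE /=).
Ltac sscase S := rewrite (ssetE S); case: (o0 \in S); case: (o1 \in S); case: (o2 \in S); case: (o3 \in S).


Lemma samulDl u v w : samul (u + v) w = samul u w + samul v w :> supalg K.
Proof. apply/ffunP => S; rewrite !ffunE -big_split; apply: eq_bigr => T _; by rewrite !ffunE ?mulrDl !mulrDr. Qed.
Lemma samulBl u v w : samul (u - v) w = samul u w - samul v w :> supalg K.
Proof. apply/ffunP => S; rewrite !ffunE -sumrB; apply: eq_bigr => T _; rewrite !ffunE; ring. Qed.
Lemma samulDr u v w : samul w (u + v) = samul w u + samul w v :> supalg K.
Proof. apply/ffunP => S; rewrite !ffunE -big_split; apply: eq_bigr => T _; by rewrite !ffunE ?mulrDl !mulrDr. Qed.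
Lemma samulBr u v w : samul w (u - v) = samul w u - samul w v :> supalg K.
Proof. apply/ffunP => S; rewrite !ffunE -sumrB; apply: eq_bigr => T _; rewrite !ffunE; ring. Qed.

Ltac fin := try (by []); try ring.

Lemma m01 : samul (mono (sset true false false false) 1) (mono (sset false true false false) 1)
  = mono (sset true true false false) (1 : P).
Proof. apply/ffunP => S; sscase S; simp; fin. Qed.

Lemma h2E : @h2 K = [ffun S => if S == sset true true true false then d2 K
   else if S == sset true true false true then - d1 K else 0].
Proof.
rewrite /h2 /y1 /y2 /y1' /y2' !yvE set1_0 set1_1 set1_2 set1_3 dx1E dx2E m01.
apply/ffunP => S; sscase S; simp; rewrite /d1 /d2; fin.
Qed.

Lemma s0E : s0 = set0.
Proof. by apply/setP => i; rewrite !inE; case: i => [[|[|[|[|i]]]] Hi]. Qed.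

Lemma ninv0r T : ninv T set0 = 0%N.
Proof. rewrite ninvE; apply: big1 => i _; apply: big1 => j _; by rewrite inE andbF. Qed.
Lemma ninv0l T : ninv set0 T = 0%N.
Proof. rewrite ninvE; apply: big1 => i _; apply: big1 => j _; by rewrite inE. Qed.

Lemma mono_s0r T (c f : P) : samul (mono T c) (mono s0 f) = mono T (c * f).
Proof.
apply/ffunP => S; rewrite samul_monor !ffunE s0E sub0set setD0 ninv0r expr0 mul1r.
by case: eqP => _; rewrite ?mul0r.
Qed.
Lemma mono_s0l T (c f : P) : samul (mono s0 f) (mono T c) = mono T (f * c).
Proof.
apply/ffunP => S; rewrite samul_monol !ffunE s0E sub0set setD0 ninv0l expr0 mul1r.
by case: eqP => _; rewrite ?mulr0.
Qed.
Lemma samul_s0l (f : P) v : samul (mono s0 f) v = [ffun S => f * v S].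
Proof. by apply/ffunP => S; rewrite samul_monol !ffunE s0E sub0set setD0 ninv0l expr0 mul1r. Qed.
Lemma samul_s0r (f : P) v : samul v (mono s0 f) = [ffun S => v S * f].
Proof. by apply/ffunP => S; rewrite samul_monor !ffunE s0E sub0set setD0 ninv0r expr0 mul1r. Qed.

Lemma m23 : samul (mono (sset false false true false) 1) (mono (sset false false false true) 1)
  = mono (sset false false true true) (1 : P).
Proof. apply/ffunP => S; sscase S; simp; fin. Qed.
Lemma m012 : samul (mono (sset true true false false) 1) (mono (sset false false true false) 1)
  = mono (sset true true true false) (1 : P).
Proof. apply/ffunP => S; sscase S; simp; fin. Qed.
Lemma m0123 : samul (mono (sset true true true false) 1) (mono (sset false false false true) 1)
  = mono (sset true true true true) (1 : P).
Proof. apply/ffunP => S; sscase S; simp; fin. Qed.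

Lemma h3E : @h3 K = [ffun S => if S == sset true false true true then d2 K
   else if S == sset false true true true then - d1 K else 0].
Proof.
rewrite /h3 /y1 /y2 /y1' /y2' !yvE set1_0 set1_1 set1_2 set1_3 dx1E dx2E m23.
apply/ffunP => S; sscase S; simp; rewrite /d1 /d2; fin.
Qed.

Lemma h1E : @h1 K = mono (sset true true true true) 1.
Proof.
by rewrite /h1 /y1 /y2 /y1' /y2' !yvE set1_0 set1_1 set1_2 set1_3 m01 m012 m0123.
Qed.

Lemma h4E : @h4 K = [ffun S =>
   if S == sset true false true false then - (d2 K * d2 K)
   else if S == sset false true true false then d1 K * d2 K
   else if S == sset true false false true then d1 K * d2 K
   else if S == sset false true false true then - (d1 K * d1 K) else 0].
Proof.
rewrite /h4 /y1 /y2 /y1' /y2' !yvE set1_0 set1_1 set1_2 set1_3 dx1E dx2E !mono_s0r !mul1r samulBl.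
apply/ffunP => S; sscase S; simp; rewrite /d1 /d2; fin.
Qed.
End A.
Ltac simp := repeat progress (rewrite ?samul_monol ?samul_monor ?ffunE ?sset_sub ?sset_diff ?sset_eq ?ninv_sset ?sgnE /=).
Ltac sscase S := rewrite (ssetE S); case: (o0 \in S); case: (o1 \in S); case: (o2 \in S); case: (o3 \in S).
Ltac fin := try (by []); try ring.




Section B.
Variable K : fieldType.
Local Notation P := {mpoly K[4]}.
Local Notation SA := (supalg K).

Lemma mk2E (a b c d : SA) :
  [/\ mk2 a b c d 0 0 = a, mk2 a b c d 0 1 = b, mk2 a b c d 1 0 = c & mk2 a b c d 1 1 = d].
Proof. by rewrite !mxE. Qed.

Lemma AE (A : 'M[SA]_2) : A = mk2 (A 0 0) (A 0 1) (A 1 0) (A 1 1).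
Proof.
apply/matrixP => i j; rewrite mxE.
by case: i => [[|[|?]] Hi]; case: j => [[|[|?]] Hj] //=; congr (A _ _); apply/val_inj.
Qed.

Lemma mk2mul (a b c d a' b' c' d' : SA) :
  smxmul (mk2 a b c d) (mk2 a' b' c' d') =
  mk2 (samul a a' + samul b c') (samul a b' + samul b d')
      (samul c a' + samul d c') (samul c b' + samul d d').
Proof.
apply/matrixP => i j; rewrite !mxE !big_ord_recl big_ord0 !mxE.
rewrite addr0.
by case: i => [[|[|?]] Hi]; case: j => [[|[|?]] Hj].
Qed.

Lemma mk2_eq (a b c d a' b' c' d' : SA) :
  mk2 a b c d = mk2 a' b' c' d' -> [/\ a = a', b = b', c = c' & d = d'].
Proof.
move=> h; have h00 := congr1 (fun M : 'M[SA]_2 => M 0 0) h.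
have h01 := congr1 (fun M : 'M[SA]_2 => M 0 1) h.
have h10 := congr1 (fun M : 'M[SA]_2 => M 1 0) h.
have h11 := congr1 (fun M : 'M[SA]_2 => M 1 1) h.
by move: h00 h01 h10 h11; rewrite !mxE.
Qed.

Definition X0 : SA := mono s0 'X_0.
Definition X1 : SA := mono s0 'X_1.
Definition X2 : SA := mono s0 'X_2.
Definition X3 : SA := mono s0 'X_3.
Definition Y0 : SA := mono (sset true false false false) 1.
Definition Y1 : SA := mono (sset false true false false) 1.
Definition Y2 : SA := mono (sset false false true false) 1.
Definition Y3 : SA := mono (sset false false false true) 1.

Lemma C1E : @C1 K = mk2 X0 Y0 Y2 X2.
Proof. by rewrite /C1 /x1 /x1' /y1 /y1' /xv !embE !yvE set1_0 set1_2. Qed.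
Lemma C2E : @C2 K = mk2 X1 Y1 Y3 X3.
Proof. by rewrite /C2 /x2 /x2' /y2 /y2' /xv !embE !yvE set1_1 set1_3. Qed.

Definition par (p : bool) (u : SA) := forall S : {set 'I_4}, odd #|S| != p -> u S = 0.

Lemma par_sset p u : par p u -> forall a0 a1 a2 a3 : bool,
  odd (a0 + a1 + a2 + a3) != p -> u (sset a0 a1 a2 a3) = 0.
Proof. by move=> h a0 a1 a2 a3 hp; apply: h; rewrite card_sset. Qed.

Lemma par_samul p q u v : par p u -> par q v -> par (p (+) q) (samul u v).
Proof.
move=> hu hv S hS; rewrite ffunE; apply: big1 => T TS.
have hc : #|S| = (#|T| + #|S :\: T|)%N.
  by rewrite -(cardsID T S) (setIidPr TS).
case: (boolP (odd #|T| == p)) => hT; last by rewrite hu ?mul0r ?mulr0.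
case: (boolP (odd #|S :\: T| == q)) => hST; last by rewrite (hv _ hST) !mulr0.
by move: hS; rewrite hc oddD (eqP hT) (eqP hST) eqxx.
Qed.

Lemma ps p q r u v : par p u -> par q v -> p (+) q = r -> par r (samul u v).
Proof. by move=> hu hv <-; apply: par_samul. Qed.

Lemma par_add p u v : par p u -> par p v -> par p (u + v).
Proof. by move=> hu hv S hS; rewrite ffunE hu // hv // addr0. Qed.

Lemma par0 p : par p 0.
Proof. by move=> S _; rewrite ffunE. Qed.

Lemma par_mono0 (f : P) : par false (mono s0 f).
Proof. by move=> S hS; rewrite ffunE s0E; case: (S =P set0) hS => [->|] //; rewrite cards0. Qed.

Lemma par_mono1 (T : {set 'I_4}) (f : P) : #|T| = 1%N -> par true (mono T f).
Proof. by move=> hT S hS; rewrite ffunE; case: (S =P T) hS => [->|] //; rewrite hT. Qed.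

Definition parA (A : 'M[SA]_2) :=
  [/\ par false (A 0 0), par true (A 0 1), par true (A 1 0) & par false (A 1 1)].

Lemma parA_mk2 a b c d : par false a -> par true b -> par true c -> par false d ->
  parA (mk2 a b c d).
Proof. by move=> *; split; rewrite mxE. Qed.

Lemma inF_par (A : 'M[SA]_2) : inF A -> parA A.
Proof.
elim => [c|||A1 B1 _ [a1 b1 c1 d1] _ [a2 b2 c2 d2]|A1 B1 _ hA _ hB].
- by apply: parA_mk2; rewrite ?embE; apply: par0 || apply: par_mono0.
- rewrite C1E; apply: parA_mk2; (apply: par_mono0 || apply: par_mono1);
  by rewrite card_sset.
- rewrite C2E; apply: parA_mk2; (apply: par_mono0 || apply: par_mono1);
  by rewrite card_sset.
- by split; rewrite mxE; apply: par_add.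
- rewrite (AE A1) (AE B1) mk2mul.
  case: hA => a1 b1 c1 d1; case: hB => a2 b2 c2 d2.
  by apply: parA_mk2; apply: par_add; apply: ps; (eassumption || done).
Qed.
End B.
Arguments par_sset {K p u} _ a0 a1 a2 a3 _.



Section C.
Variable K : fieldType.
Local Notation P := {mpoly K[4]}.
Local Notation SA := (supalg K).


Lemma at_ (u v : SA) S : u = v -> u S = v S.
Proof. by move=> ->. Qed.

Lemma lin_helper (x y l r k : P) : l = r -> x - y = k * (l - r) -> x = y.
Proof. by move=> -> /eqP; rewrite subrr mulr0 subr_eq0 => /eqP. Qed.

Lemma lin0 (x l r k dd : P) : dd != 0 -> l = r -> x * dd = k * (l - r) -> x = 0.
Proof.
move=> hd -> /eqP; rewrite subrr mulr0 mulf_eq0 (negbTE hd) orbF => /eqP //.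
Qed.

Ltac killo pa :=
  try rewrite !(par_sset pa true false false false isT);
  try rewrite !(par_sset pa false true false false isT);
  try rewrite !(par_sset pa false false true false isT);
  try rewrite !(par_sset pa false false false true isT);
  try rewrite !(par_sset pa true true true false isT);
  try rewrite !(par_sset pa true true false true isT);
  try rewrite !(par_sset pa true false true true isT);
  try rewrite !(par_sset pa false true true true isT).
Ltac kille pa :=
  try rewrite !(par_sset pa false false false false isT);
  try rewrite !(par_sset pa true true false false isT);
  try rewrite !(par_sset pa true false true false isT);
  try rewrite !(par_sset pa true false false true isT);
  try rewrite !(par_sset pa false true true false isT);
  try rewrite !(par_sset pa false true false true isT);
  try rewrite !(par_sset pa false false true true isT);
  try rewrite !(par_sset pa true true true true isT).
Ltac kill pa := first [killo pa | idtac]; first [kille pa | idtac].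

Ltac unf := rewrite /X0 /X1 /X2 /X3 /Y0 /Y1 /Y2 /Y3.

Ltac zsolve H := first
  [ apply: (lin0 (k:=1) (d1_neq0 K) H); rewrite /d1 /d2; ring
  | apply: (lin0 (k:=-1) (d1_neq0 K) H); rewrite /d1 /d2; ring
  | apply: (lin0 (k:=1) (d2_neq0 K) H); rewrite /d1 /d2; ring
  | apply: (lin0 (k:=-1) (d2_neq0 K) H); rewrite /d1 /d2; ring ].

Ltac esolve H := first
  [ apply: (lin_helper (k:=1) H); rewrite /d1 /d2; ring
  | apply: (lin_helper (k:=-1) H); rewrite /d1 /d2; ring ].

Lemma main_gen (a b c d : SA) : par false a -> par true b -> par true c -> par false d ->
  (smxmul (mk2 a b c d) (@C1 K) = smxmul (@C1 K) (mk2 a b c d) /\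
   smxmul (mk2 a b c d) (@C2 K) = smxmul (@C2 K) (mk2 a b c d)) <->
  (exists f1 f4 : P,
     b = samul (emb f4) (@h2 K) /\
     c = - samul (emb f4) (@h3 K) /\
     d = a + samul (emb f1) (@h1 K) + samul (emb f4) (@h4 K)).
Proof.
move=> pa pb pc pd; split.
- case=> H1 H2.
  rewrite C1E !mk2mul in H1; case/mk2_eq: H1 => E00 E01 E10 E11.
  rewrite C2E !mk2mul in H2; case/mk2_eq: H2 => F00 F01 F10 F11.
  have hb0100 : b (sset false true false false) = 0.
    move: (at_ (sset false true false false) E01); unf; simp; killo pa; kille pb; kille pc; killo pd => H; zsolve H.
  have hb0010 : b (sset false false true false) = 0.
    move: (at_ (sset false false true false) E01); unf; simp; killo pa; kille pb; kille pc; killo pd => H; zsolve H.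
  have hb0001 : b (sset false false false true) = 0.
    move: (at_ (sset false false false true) E01); unf; simp; killo pa; kille pb; kille pc; killo pd => H; zsolve H.
  have hb0111 : b (sset false true true true) = 0.
    move: (at_ (sset false true true true) E01); unf; simp; killo pa; kille pb; kille pc; killo pd => H; zsolve H.
  have hb1000 : b (sset true false false false) = 0.
    move: (at_ (sset true false false false) F01); unf; simp; killo pa; kille pb; kille pc; killo pd => H; zsolve H.
  have hb1011 : b (sset true false true true) = 0.
    move: (at_ (sset true false true true) F01); unf; simp; killo pa; kille pb; kille pc; killo pd => H; zsolve H.
  have hc1000 : c (sset true false false false) = 0.
    move: (at_ (sset true false false false) E10); unf; simp; killo pa; kille pb; kille pc; killo pd => H; zsolve H.
  have hc0100 : c (sset false true false false) = 0.
    move: (at_ (sset false true false false) E10); unf; simp; killo pa; kille pb; kille pc; killo pd => H; zsolve H.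
  have hc0001 : c (sset false false false true) = 0.
    move: (at_ (sset false false false true) E10); unf; simp; killo pa; kille pb; kille pc; killo pd => H; zsolve H.
  have hc1101 : c (sset true true false true) = 0.
    move: (at_ (sset true true false true) E10); unf; simp; killo pa; kille pb; kille pc; killo pd => H; zsolve H.
  have hc0010 : c (sset false false true false) = 0.
    move: (at_ (sset false false true false) F10); unf; simp; killo pa; kille pb; kille pc; killo pd => H; zsolve H.
  have hc1110 : c (sset true true true false) = 0.
    move: (at_ (sset true true true false) F10); unf; simp; killo pa; kille pb; kille pc; killo pd => H; zsolve H.
  have he0000 : d (sset false false false false) = a (sset false false false false).
    move: (at_ (sset true false false false) E01); unf; simp; killo pa; kille pb; kille pc; killo pd; rewrite ?hb0100 ?hb0010 ?hb0001 ?hb0111 ?hb1000 ?hb1011 ?hc1000 ?hc0100 ?hc0001 ?hc1101 ?hc0010 ?hc1110 => H; esolve H.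
  have he1100 : d (sset true true false false) = a (sset true true false false).
    move: (at_ (sset true true true false) E10); unf; simp; killo pa; kille pb; kille pc; killo pd; rewrite ?hb0100 ?hb0010 ?hb0001 ?hb0111 ?hb1000 ?hb1011 ?hc1000 ?hc0100 ?hc0001 ?hc1101 ?hc0010 ?hc1110 => H; esolve H.
  have he0011 : d (sset false false true true) = a (sset false false true true).
    move: (at_ (sset true false true true) E01); unf; simp; killo pa; kille pb; kille pc; killo pd; rewrite ?hb0100 ?hb0010 ?hb0001 ?hb0111 ?hb1000 ?hb1011 ?hc1000 ?hc0100 ?hc0001 ?hc1101 ?hc0010 ?hc1110 => H; esolve H.
  have he0110 : d (sset false true true false) = a (sset false true true false) + b (sset true true true false) * d1 K.
    move: (at_ (sset true true true false) E01); unf; simp; killo pa; kille pb; kille pc; killo pd; rewrite ?hb0100 ?hb0010 ?hb0001 ?hb0111 ?hb1000 ?hb1011 ?hc1000 ?hc0100 ?hc0001 ?hc1101 ?hc0010 ?hc1110 => H; esolve H.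
  have he0101 : d (sset false true false true) = a (sset false true false true) + b (sset true true false true) * d1 K.
    move: (at_ (sset true true false true) E01); unf; simp; killo pa; kille pb; kille pc; killo pd; rewrite ?hb0100 ?hb0010 ?hb0001 ?hb0111 ?hb1000 ?hb1011 ?hc1000 ?hc0100 ?hc0001 ?hc1101 ?hc0010 ?hc1110 => H; esolve H.
  have he1010 : d (sset true false true false) = a (sset true false true false) - b (sset true true true false) * d2 K.
    move: (at_ (sset true true true false) F01); unf; simp; killo pa; kille pb; kille pc; killo pd; rewrite ?hb0100 ?hb0010 ?hb0001 ?hb0111 ?hb1000 ?hb1011 ?hc1000 ?hc0100 ?hc0001 ?hc1101 ?hc0010 ?hc1110 => H; esolve H.
  have he1001 : d (sset true false false true) = a (sset true false false true) - b (sset true true false true) * d2 K.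
    move: (at_ (sset true true false true) F01); unf; simp; killo pa; kille pb; kille pc; killo pd; rewrite ?hb0100 ?hb0010 ?hb0001 ?hb0111 ?hb1000 ?hb1011 ?hc1000 ?hc0100 ?hc0001 ?hc1101 ?hc0010 ?hc1110 => H; esolve H.
  have hc1011 : c (sset true false true true) = - b (sset true true true false).
    move: (at_ (sset true true true true) F00); unf; simp; killo pa; kille pb; kille pc; killo pd; rewrite ?hb0100 ?hb0010 ?hb0001 ?hb0111 ?hb1000 ?hb1011 ?hc1000 ?hc0100 ?hc0001 ?hc1101 ?hc0010 ?hc1110 => H; esolve H.
  have hc0111 : c (sset false true true true) = - b (sset true true false true).
    move: (at_ (sset true true true true) E00); unf; simp; killo pa; kille pb; kille pc; killo pd; rewrite ?hb0100 ?hb0010 ?hb0001 ?hb0111 ?hb1000 ?hb1011 ?hc1000 ?hc0100 ?hc0001 ?hc1101 ?hc0010 ?hc1110 => H; esolve H.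
  have hrel : b (sset true true true false) * d1 K + b (sset true true false true) * d2 K = 0.
    move: (at_ (sset true false true true) E10); unf; simp; killo pa; kille pb; kille pc; killo pd; rewrite ?hb0100 ?hb0010 ?hb0001 ?hb0111 ?hb1000 ?hb1011 ?hc1000 ?hc0100 ?hc0001 ?hc1101 ?hc0010 ?hc1110; rewrite hc1011 he1001 => H; esolve H.
  case: (divis hrel) => f [hu hv].
  exists (d (sset true true true true) - a (sset true true true true)), f.
  split; [|split]; apply/ffunP => S;
    rewrite ?embE ?h1E ?h2E ?h3E ?h4E; sscase S; simp; killo pa; kille pb; kille pc; killo pd; rewrite ?hb0100 ?hb0010 ?hb0001 ?hb0111 ?hb1000 ?hb1011 ?hc1000 ?hc0100 ?hc0001 ?hc1101 ?hc0010 ?hc1110; rewrite ?he0000 ?he1100 ?he0011 ?he0110 ?he0101 ?he1010 ?he1001 ?hc1011 ?hc0111 ?hu ?hv; rewrite /d1 /d2; ring.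
- case=> f1 [f4 [hb [hc hd]]].
  rewrite C1E C2E !mk2mul; split; congr (mk2 _ _ _ _); apply/ffunP => S;
  rewrite ?hb ?hc ?hd !embE ?h1E ?h2E ?h3E ?h4E; unf;
  rewrite (ssetE S); case: (o0 \in S); case: (o1 \in S); case: (o2 \in S); case: (o3 \in S);
  simp; killo pa; rewrite /d1 /d2; ring.
Qed.
End C.

Theorem corollary1 (K : fieldType)
    (K_infinite : forall s : seq K, exists k : K, k \notin s)
    (K_char : (2%:R : K) != 0)
    (A : 'M[supalg K]_2) (A_in_F : inF A) :
  (smxmul A (@C1 K) = smxmul (@C1 K) A /\ smxmul A (@C2 K) = smxmul (@C2 K) A)
  <->
  (exists f1 f4 : {mpoly K[4]},
     A 0 1 = samul (emb f4) (@h2 K) /\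
     A 1 0 = - samul (emb f4) (@h3 K) /\
     A 1 1 = A 0 0 + samul (emb f1) (@h1 K) + samul (emb f4) (@h4 K)).
Proof.
case: (inF_par A_in_F) => pa pb pc pd.
by have := main_gen pa pb pc pd; rewrite -AE.
Qed.
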